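(* Let $n\ge 2$, let $P\neq[n,n-1,\ldots,1]$ be an arithmetically progressed permutation of length $n$ with ratio $k$, and let $\mathsf{T}_P$ be its associated ternary string. Then the matrix-based BWT of $\mathsf{T}_P$ coincides with the suffix-array-based BWT of $\mathsf{T}_P$.
   Context: Alphabet $\{\mathtt{a}<\mathtt{b}<\mathtt{c}\}$, lexicographic order $\prec$ with a proper prefix smaller than the longer string; suffix array $\mathsf{SA}_{\mathsf{T}}$: permutation of $[1..n]$ such that $\mathsf{T}[\mathsf{SA}_{\mathsf{T}}[i]..n]$ is the $i$-th smallest suffix. $x\bmod n$ denotes the representative of $x$ modulo $n$ in $[1..n]$. An arithmetically progressed permutation of length $n$ with ratio $k\in[1..n-1]$ is a permutation $P=[p_1,\ldots,p_n]$ of $[1..n]$ with $p_{i+1}=p_i+k\bmod n$. Ternary string associated with $P$: cut $P$ immediately after the entry $n-k$ and immediately after the entry $(p_1-k-1)\bmod n$, giving consecutive possibly empty blocks $A,B,C$ with $P=ABC$; set $\mathsf{T}_P[p_i]=\mathtt{a},\mathtt{b},\mathtt{c}$ according as $p_i$ lies in $A$, $B$, $C$. Suffix-array-based BWT: $\mathsf{BWT}_{\mathsf{T}}[i]=\mathsf{T}[\mathsf{SA}_{\mathsf{T}}[i]-1\bmod n]$. Matrix-based BWT: sort the $n$ cyclic rotations $\mathsf{T}[j..n]\mathsf{T}[1..j-1]$ lexicographically and read, top to bottom, the last character of each sorted rotation. *)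

(* Defs.v *)
From mathcomp Require Import all_boot.
Set Implicit Arguments. Unset Strict Implicit. Unset Printing Implicit Defensive.

(* Letters: a = 0, b = 1, c = 2 (so a < b < c is the order on nat).
   Strings are [seq nat]; positions are 1-based as in the paper:
   T[j] = nth 0 T j.-1, and T[j..n] = drop j.-1 T. *)
Definition chr_a := 0.
Definition chr_b := 1.
Definition chr_c := 2.

Fixpoint lexle (s t : seq nat) : bool :=
  match s, t with
  | [::], _ => true
  | _ :: _, [::] => false
  | x :: s', y :: t' => (x < y) || ((x == y) && lexle s' t')
  end.

(* x mod n : the representative of x modulo n in [1..n] (for n >= 1). *)
Definition amod (m n : nat) : nat := ((m + n.-1) %% n).+1.

Definition is_APP (n k : nat) (P : seq nat) : Prop :=
  [/\ perm_eq P (iota 1 n), 1 <= k <= n.-1 &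
      forall i, i.+1 < n -> nth 0 P i.+1 = amod (nth 0 P i + k) n].

(* Ternary string associated with P: cut P immediately after the entry n-k
   and immediately after the entry (p_1 - k - 1) mod n (computed as
   (p_1 + n - k - 1) mod n, which is congruent and non-negative).
   [lo] and [hi] are the lengths of the prefixes ending at the two cuts,
   ordered, so that A = P[1..lo], B = P[lo+1..hi], C = P[hi+1..n]. *)
Definition ternary (n k : nat) (P : seq nat) : seq nat :=
  let x := amod (head 0 P + n - k - 1) n in
  let c1 := (index (n - k) P).+1 in
  let c2 := (index x P).+1 in
  let lo := minn c1 c2 in
  let hi := maxn c1 c2 in
  [seq (let pos := index j P in
        if pos < lo then chr_a else if pos < hi then chr_b else chr_c)
  | j <- iota 1 (size P)].

Definition suffix_array (T : seq nat) : seq nat :=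
  sort (fun i j => lexle (drop i.-1 T) (drop j.-1 T)) (iota 1 (size T)).

Definition bwt_sa (T : seq nat) : seq nat :=
  [seq nth 0 T (amod (i - 1) (size T)).-1 | i <- suffix_array T].

Definition bwt_matrix (T : seq nat) : seq nat :=
  [seq last 0 r | r <- sort lexle [seq rot j.-1 T | j <- iota 1 (size T)]].

(* Main.v *)
Require Import Defs.
From mathcomp Require Import all_boot zify.
Set Implicit Arguments. Unset Strict Implicit. Unset Printing Implicit Defensive.

Lemma amod_id u n : 0 < u <= n -> amod u n = u.
Proof.
move=> /andP[u0 un]; rewrite /amod.
have -> : u + n.-1 = u.-1 + n by lia.
by rewrite modnDr modn_small; lia.
Qed.

Lemma amod_range m n : 0 < n -> 0 < amod m n <= n.
Proof. by move=> n0; rewrite /amod /= ltn_pmod. Qed.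

Lemma amod_eq m m' n : m = m' %[mod n] -> amod m n = amod m' n.
Proof. by move=> h; rewrite /amod -modnDml h modnDml. Qed.

Lemma amod_inv m m' n : amod m n = amod m' n -> m = m' %[mod n].
Proof. by rewrite /amod => -[] /eqP; rewrite eqn_modDr => /eqP. Qed.

Lemma amodD m j n : 0 < n -> amod (amod m n + j) n = amod (m + j) n.
Proof.
move=> n0; apply: amod_eq; rewrite /amod.
have -> : ((m + n.-1) %% n).+1 + j = (m + n.-1) %% n + (j + 1) by lia.
rewrite modnDml.
have -> : m + n.-1 + (j + 1) = (m + j) + n by lia.
by rewrite modnDr.
Qed.

Lemma lexle_refl s : lexle s s.
Proof. by elim: s => //= x s ->; rewrite eqxx ltnn. Qed.

Lemma lexle_trans s t u : lexle s t -> lexle t u -> lexle s u.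
Proof.
elim: s t u => [//|x s IH] [//|y t] [//|z u] /=.
case/orP=> [xy | /andP[/eqP <- st]]; case/orP=> [yz | /andP[/eqP <- tu]].
- by rewrite (ltn_trans xy yz).
- by rewrite xy.
- by rewrite yz.
- by rewrite eqxx (IH _ _ st tu) orbT.
Qed.

Lemma lex_strict s t d :
  (forall i, i < d -> nth 0 s i = nth 0 t i) -> d < size t ->
  (d = size s \/ (d < size s /\ nth 0 s d < nth 0 t d)) ->
  lexle s t && ~~ lexle t s.
Proof.
elim: s t d => [|x s IH] [|y t] d //= heq dt hd.
all: try by move: dt; rewrite ltn0.
case: d heq dt hd => [|d] heq dt hd.
  case: hd => [//|[_ xy]]; rewrite xy /=.
  by rewrite ltnNge (ltnW xy) /= eq_sym (ltn_eqF xy).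
have xy : x = y by exact: (heq 0).
subst y; rewrite ltnn eqxx /=.
apply: (IH t d) => //.
  by move=> i id; exact: (heq i.+1).
by case: hd => [[->]|[]]; [left|right].
Qed.
Lemma sort_eq_P (P : seq nat) n (r : rel nat) :
  perm_eq P (iota 1 n) ->
  {in P &, forall i j, r i j = (index i P <= index j P)} ->
  sort r (iota 1 n) = P.
Proof.
move=> pP hr.
have uP : uniq P by rewrite (perm_uniq pP) iota_uniq.
have memE : forall x, (x \in iota 1 n) = (x \in P) by move=> x; rewrite (perm_mem pP).
symmetry; apply: (sorted_eq_in (leT:=r)).
- move=> y x z yP xP zP; rewrite !hr //; exact: leq_trans.
- move=> x y xP yP /andP[]; rewrite !hr // => h1 h2.
  have e : index x P = index y P by apply/eqP; rewrite eqn_leq h1 h2.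
  by rewrite -(nth_index 0 xP) e nth_index.
- apply/(sortedP 0) => i hi.
  have hi' : i < size P by rewrite ltnW.
  by rewrite hr ?mem_nth // !index_uniq.
- have tot : {in iota 1 n &, total r}.
    by move=> x y; rewrite !memE => xP yP; rewrite !hr // leq_total.
  exact: (sort_sorted_in tot (allss _)).
- by rewrite perm_sym perm_sort perm_sym.
Qed.
Lemma rot_mkseq (T : seq nat) n u : size T = n -> 0 < u <= n ->
  rot u.-1 T = mkseq (fun i => nth 0 T (amod (u+i) n).-1) n.
Proof.
move=> sT hu; apply: (@eq_from_nth _ 0); first by rewrite size_rot size_mkseq.
move=> i; rewrite size_rot sT => hi; rewrite nth_mkseq // /amod /= /rot nth_cat size_drop sT.
case: ifP => h.
  rewrite nth_drop (_ : u + i + n.-1 = u.-1 + i + n); last by lia.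
  by rewrite modnDr modn_small //; lia.
rewrite nth_take; last by lia.
rewrite (_ : u + i + n.-1 = 2 * n + (i - (n - u.-1))); last by lia.
by rewrite modnMDl modn_small //; lia.
Qed.

Lemma drop_mkseq (T : seq nat) n u : size T = n -> 0 < u <= n ->
  drop u.-1 T = mkseq (fun i => nth 0 T (amod (u+i) n).-1) (n - u.-1).
Proof.
move=> sT hu; apply: (@eq_from_nth _ 0); first by rewrite size_drop size_mkseq sT.
move=> i; rewrite size_drop sT => hi; rewrite nth_mkseq // /amod /= nth_drop.
rewrite (_ : u + i + n.-1 = u.-1 + i + n); last by lia.
by rewrite modnDr modn_small //; lia.
Qed.

Theorem theorem4 (n k : nat) (P : seq nat) :
  2 <= n -> is_APP n k P -> P != rev (iota 1 n) ->
  bwt_matrix (ternary n k P) = bwt_sa (ternary n k P).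
Proof.
move=> n2 [pP /andP[k1 kn] rec] _.
have n0 : 0 < n by lia.
have uP : uniq P by rewrite (perm_uniq pP) iota_uniq.
have sP : size P = n by rewrite (perm_size pP) size_iota.
have memP : forall u, (u \in P) = (0 < u <= n).
  by move=> u; rewrite (perm_mem pP) mem_iota; lia.
set p1 := head 0 P.
have p1E : p1 = nth 0 P 0 by rewrite /p1 nth0.
have hPr : forall i, i < n -> 0 < nth 0 P i <= n.
  by move=> i hi; rewrite -memP mem_nth // sP.
have hcl : forall i, i < n -> nth 0 P i = amod (p1 + i * k) n.
  elim=> [|i IH] hi; first by rewrite mul0n addn0 amod_id // p1E; exact: hPr.
  rewrite rec // IH 1?ltnW // amodD //; congr amod; nia.
set r := fun u => index u P.
have hr : forall u, 0 < u <= n -> r u < n by move=> u hu; rewrite -sP index_mem memP.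
have hnth : forall u, 0 < u <= n -> nth 0 P (r u) = u by move=> u hu; rewrite nth_index // memP.
have hrnth : forall i, i < n -> r (nth 0 P i) = i by move=> i hi; rewrite /r index_uniq // sP.
have hsucc : forall u, 0 < u <= n -> (r u).+1 < n -> r (amod (u+k) n) = (r u).+1.
  by move=> u hu hlt; have := rec _ hlt; rewrite hnth // => <-; exact: hrnth.
set x := amod (p1 + n - k - 1) n.
set c1 := (index (n - k) P).+1.
set c2 := (index x P).+1.
set letter := fun i => if i < minn c1 c2 then 0 else if i < maxn c1 c2 then 1 else 2.
set T := ternary n k P.
have sT : size T = n by rewrite /T /ternary size_map size_iota.
have hT : forall u, 0 < u <= n -> nth 0 T u.-1 = letter (r u).
  move=> u hu; rewrite /T /ternary (nth_map 0); last by rewrite size_iota sP; lia.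
  rewrite nth_iota; last by rewrite sP; lia.
  by have -> : 1 + u.-1 = u by lia.
set c := fun m => nth 0 T (amod m n).-1.
have hc : forall m, c m = letter (r (amod m n)) by move=> m; rewrite /c hT // amod_range.
have hcA : forall m j, c (amod m n + j) = c (m + j) by move=> m j; rewrite /c amodD.
have mono : forall i j, i <= j -> letter i <= letter j.
  move=> i j ij; rewrite /letter.
  case: (ltnP i (minn c1 c2)) => h1; case: (ltnP i (maxn c1 c2)) => h2;
  case: (ltnP j (minn c1 c2)) => h3; case: (ltnP j (maxn c1 c2)) => h4; lia.
have cut : forall cc, (cc = c1 \/ cc = c2) -> letter cc.-1 < letter cc.
  move=> cc hcc; have cc0 : 0 < cc by case: hcc => ->.
  rewrite /letter.
  case: (ltnP cc.-1 (minn c1 c2)) => h1; case: (ltnP cc.-1 (maxn c1 c2)) => h2;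
  case: (ltnP cc (minn c1 c2)) => h3; case: (ltnP cc (maxn c1 c2)) => h4;
  case: hcc => hcc; lia.
have x_r : 0 < x <= n by exact: amod_range.
have nk_r : 0 < n - k <= n by lia.
have strict_nk : letter (r (n-k)) < letter (r (n-k)).+1 by exact: (cut c1 (or_introl erefl)).
have strict_x : letter (r x) < letter (r x).+1 by exact: (cut c2 (or_intror erefl)).
have pair_le : forall u, 0 < u <= n -> (r u).+1 < n ->
    letter (r u) <= letter (r (amod (u+k) n)).
  by move=> u hu hlt; rewrite hsucc //; apply: mono.
have p1r : 0 < p1 <= n by rewrite p1E; apply: hPr.
have hlastE : amod (x + 1) n = nth 0 P n.-1.
  rewrite hcl; last by lia.
  rewrite /x amodD //; apply: amod_eq; apply/eqP; rewrite -(eqn_modDr k).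
  have -> : p1 + n - k - 1 + 1 + k = p1 + n by lia.
  have -> : p1 + n.-1 * k + k = p1 + n * k by rewrite -addnA -mulSnr prednK.
  by rewrite modnDr addnC mulnC modnMDl.
have step : forall u, 0 < u <= n -> (r u).+1 < n -> u != x ->
    (r (amod (u+1) n)).+1 < n.
  move=> u hu hlt hux.
  have wr : 0 < amod (u+1) n <= n by exact: amod_range.
  case E : (r (amod (u+1) n) == n.-1).
    move/eqP: E => E.
    have : amod (u+1) n = amod (x+1) n by rewrite hlastE -E hnth.
    move/amod_inv/eqP; rewrite eqn_modDr => /eqP /amod_eq.
    by rewrite (amod_id hu) (amod_id x_r) => exu; rewrite exu eqxx in hux.
  by move: E (hr _ wr); lia.
have succ_step : forall u, amod (amod (u+1) n + k) n = amod (amod (u+k) n + 1) n.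
  by move=> u; rewrite !amodD // addnAC.
have chain : forall t u, 0 < u <= n -> (r u).+1 < n -> amod (u + t) n = x ->
  exists d, d <= t /\ (forall i, i < d -> c (u+i) = c (amod (u+k) n + i) /\
        amod (u+i) n != n - k) /\ c (u+d) < c (amod (u+k) n + d).
  elim=> [|t IH] u hu hlt hx.
    exists 0; split => //; split => //.
    rewrite !addn0 !hc (amod_id hu) (amod_id (amod_range (u+k) n0)) hsucc //.
    by move: hx; rewrite addn0 (amod_id hu) => ->; exact: strict_x.
  have hle := pair_le u hu hlt.
  case: (ltnP (letter (r u)) (letter (r (amod (u+k) n)))) => hlv.
    exists 0; split => //; split => //.
    by rewrite !addn0 !hc (amod_id hu) (amod_id (amod_range (u+k) n0)).
  have heq : letter (r u) = letter (r (amod (u+k) n)) by lia.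
  have hux : u != x.
    apply/eqP => e; rewrite e in hlt hlv; rewrite hsucc // in hlv.
    by have := strict_x; lia.
  have hunk : u != n - k.
    apply/eqP => e; rewrite e in hlt hlv; rewrite hsucc // in hlv.
    by have := strict_nk; lia.
  set w := amod (u+1) n.
  have wr : 0 < w <= n by exact: amod_range.
  have wlt := step u hu hlt hux.
  have hwx : amod (w + t) n = x by rewrite /w amodD // -hx; congr amod; lia.
  have [d [hdt [hi hd]]] := IH w wr wlt hwx.
  have e1 : forall i, c (u + i.+1) = c (w + i) by move=> i; rewrite /w hcA (_ : u + 1 + i = u + i.+1) //; lia.
  have e2 : forall i, c (amod (u+k) n + i.+1) = c (amod (w+k) n + i).
    by move=> i; rewrite /w succ_step [X in _ = X]hcA (_ : amod (u + k) n + 1 + i = amod (u+k) n + i.+1) //; lia.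
  have e3 : forall i, amod (u + i.+1) n = amod (w + i) n.
    by move=> i; rewrite /w amodD // (_ : u + 1 + i = u + i.+1) //; lia.
  exists d.+1; split; first lia.
  split; last by rewrite e1 e2.
  case=> [_|i hi1].
    by rewrite !addn0 !hc (amod_id hu) (amod_id (amod_range (u+k) n0)).
  by rewrite e1 e2 e3; apply: hi.
have exist_t : forall u, 0 < u <= n -> exists2 t, t < n & amod (u+t) n = x.
  move=> u hu; exists ((x + n - u) %% n); first by rewrite ltn_mod.
  rewrite -{2}(amod_id x_r); apply: amod_eq.
  rewrite modnDmr (_ : u + (x + n - u) = x + n); last by lia.
  by rewrite modnDr.
have chain' : forall u, 0 < u <= n -> (r u).+1 < n ->
  exists d, d < n /\ (forall i, i < d -> c (u+i) = c (amod (u+k) n + i) /\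
        amod (u+i) n != n - k) /\ c (u+d) < c (amod (u+k) n + d).
  move=> u hu hlt; have [t tn ht] := exist_t u hu.
  have [d [dt rest]] := chain t u hu hlt ht.
  by exists d; split; first lia.
have hrot : forall u, 0 < u <= n -> rot u.-1 T = mkseq (fun i => c (u+i)) n.
  by move=> u hu; rewrite (rot_mkseq sT hu).
have hdrop : forall u, 0 < u <= n -> drop u.-1 T = mkseq (fun i => c (u+i)) (n - u.-1).
  by move=> u hu; rewrite (drop_mkseq sT hu).
have pair_strict : forall u, 0 < u <= n -> (r u).+1 < n ->
  (lexle (rot u.-1 T) (rot (amod (u+k) n).-1 T) &&
     ~~ lexle (rot (amod (u+k) n).-1 T) (rot u.-1 T)) /\
  (lexle (drop u.-1 T) (drop (amod (u+k) n).-1 T) &&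
     ~~ lexle (drop (amod (u+k) n).-1 T) (drop u.-1 T)).
  move=> u hu hlt; set v := amod (u+k) n.
  have vr : 0 < v <= n by exact: amod_range.
  have [d [dn [hi hd]]] := chain' u hu hlt.
  split.
    rewrite !hrot //; apply: (lex_strict (d:=d)).
    - by move=> i id; rewrite !nth_mkseq ?(hi i id).1 //; lia.
    - by rewrite size_mkseq.
    - by right; rewrite size_mkseq !nth_mkseq.
  rewrite !hdrop //.
  have uv : u != v.
    apply/eqP => e.
    have : amod (u + 0) n = amod (u + k) n by rewrite addn0 amod_id.
    move/amod_inv/eqP; rewrite eqn_modDl => /eqP.
    by rewrite mod0n modn_small //; lia.
  case: (ltngtP u v) => [uv'|vu|e]; last by rewrite e eqxx in uv.
  - have vE : v = u + k.
      rewrite /v; case: (leqP (u+k) n) => h; first by rewrite amod_id //; lia.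
      move: uv'; rewrite /v (@amod_eq _ (u + k - n)); last first.
        by rewrite -{1}(subnK (ltnW h)) modnDr.
      by rewrite amod_id //; lia.
    have dv : d < n - v.-1.
      rewrite ltnNge; apply/negP => h.
      have := (hi (n - v) _).2; rewrite amod_id; try lia.
    apply: (lex_strict (d:=d)).
    - by move=> i id; rewrite !nth_mkseq ?(hi i id).1 //; lia.
    - by rewrite size_mkseq.
    - right; rewrite size_mkseq !nth_mkseq //; try lia.
      by split => //; lia.
  - case: (ltnP d (n - u.-1)) => hdu.
      apply: (lex_strict (d:=d)).
      + by move=> i id; rewrite !nth_mkseq ?(hi i id).1 //; lia.
      + by rewrite size_mkseq; lia.
      + by right; rewrite size_mkseq !nth_mkseq //; lia.
    apply: (lex_strict (d := n - u.-1)).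
    + by move=> i id; rewrite !nth_mkseq ?(hi i _).1 //; lia.
    + by rewrite size_mkseq; lia.
    + by left; rewrite size_mkseq.
have chain_all : forall (f : nat -> seq nat),
  (forall a, a.+1 < n -> lexle (f (nth 0 P a)) (f (nth 0 P a.+1)) &&
       ~~ lexle (f (nth 0 P a.+1)) (f (nth 0 P a))) ->
  forall a b, a < b -> b < n -> lexle (f (nth 0 P a)) (f (nth 0 P b)) &&
       ~~ lexle (f (nth 0 P b)) (f (nth 0 P a)).
  move=> f hf a; elim=> [//|b IH] ab bn.
  case: (ltnP a b) => h; last first.
    have e : a = b by lia.
    by rewrite e; exact: hf.
  have /andP[s1 nn1] := IH h (ltnW bn).
  have /andP[s2 nn2] := hf b bn.
  rewrite (lexle_trans s1 s2) /=; apply/negP => h3.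
  by move/negP: nn2; apply; apply: lexle_trans h3 s1.
have releq : forall f : nat -> seq nat,
  (forall a, a.+1 < n -> lexle (f (nth 0 P a)) (f (nth 0 P a.+1)) &&
       ~~ lexle (f (nth 0 P a.+1)) (f (nth 0 P a))) ->
  {in P &, forall i j, lexle (f i) (f j) = (index i P <= index j P)}.
  move=> f hf i j iP jP.
  have ir : index i P < n by rewrite -sP index_mem.
  have jr : index j P < n by rewrite -sP index_mem.
  case: (ltngtP (index i P) (index j P)) => h.
  - have := chain_all f hf _ _ h jr.
    by rewrite !nth_index // => /andP[-> _].
  - have := chain_all f hf _ _ h ir.
    by rewrite !nth_index // => /andP[_ /negbTE ->].
  - have e : i = j by rewrite -(nth_index 0 iP) h nth_index.
    by rewrite e lexle_refl.
have hPsucc : forall a, a.+1 < n -> nth 0 P a.+1 = amod (nth 0 P a + k) n.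
  by move=> a ha; rewrite rec.
have hf_rot : forall a, a.+1 < n ->
   lexle (rot (nth 0 P a).-1 T) (rot (nth 0 P a.+1).-1 T) &&
   ~~ lexle (rot (nth 0 P a.+1).-1 T) (rot (nth 0 P a).-1 T).
  move=> a ha; rewrite hPsucc //.
  have hu := hPr a (ltnW ha).
  by have [] := pair_strict _ hu; rewrite ?hrnth //; lia.
have hf_drop : forall a, a.+1 < n ->
   lexle (drop (nth 0 P a).-1 T) (drop (nth 0 P a.+1).-1 T) &&
   ~~ lexle (drop (nth 0 P a.+1).-1 T) (drop (nth 0 P a).-1 T).
  move=> a ha; rewrite hPsucc //.
  have hu := hPr a (ltnW ha).
  by have [] := pair_strict _ hu; rewrite ?hrnth //; lia.
rewrite /bwt_matrix /bwt_sa /suffix_array sT sort_map.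
rewrite (@sort_eq_P P n (relpre (fun j => rot j.-1 T) lexle) pP); last first.
  exact: (releq (fun j => rot j.-1 T) hf_rot).
rewrite (@sort_eq_P P n (fun i j => lexle (drop i.-1 T) (drop j.-1 T)) pP); last first.
  exact: (releq (fun j => drop j.-1 T) hf_drop).
rewrite -map_comp; apply/eq_in_map => j jP /=.
have hj : 0 < j <= n by rewrite -memP.
rewrite hrot // -nth_last size_mkseq nth_mkseq; last by lia.
rewrite /c /amod /= (_ : j + n.-1 + n.-1 = (j - 1 + n.-1) + n); [by rewrite modnDr | lia].
Qed.
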